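(* Let $\Gamma$ be a regular axis-parallel square grid in the plane whose squares have diameter $1$ (side length $1/\sqrt{2}$), and call the open squares of $\Gamma$ cells. Consider two cells $\pi$ and $\pi'$. Let $p_1,p_2$ be any two points in $\pi'$ and $p_3,p_4$ be any two points in $\pi$. For points $x,y$ let $D(x,y)$ denote the closed disk having segment $xy$ as a diameter, and let $\mathcal{D}=D(p_1,p_2)\cup D(p_2,p_3)\cup D(p_3,p_4)$. Then: 1. If $|p_2p_3|\le 1/\sqrt{2}$, then $\mathcal{D}$ intersects at most $8$ cells. 2. If $|p_2p_3|\le 1$ and $\pi,\pi'$ are $+$-neighbors, then $\mathcal{D}$ intersects at most $8$ cells. 3. If $|p_2p_3|\le 1$ and $\pi,\pi'$ are $\times$-neighbors, then $\mathcal{D}$ intersects at most $10$ cells. 4. If $|p_2p_3|\le 1$ and $\pi,\pi'$ are not neighbors, then $\mathcal{D}$ intersects at most $11$ cells.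
   Context: The neighbors of a cell $\pi$ are the eight cells sharing a side or a corner with $\pi$. These are partitioned into the four $+$-neighbors (cells sharing a side with $\pi$) and the four $\times$-neighbors (cells sharing exactly one grid point with $\pi$). Cells are open (they do not contain their boundary), and disks are closed. *)

(* Defs.v *)
From Stdlib Require Export Reals Lra ZArith List.
Open Scope R_scope.

Definition point := (R * R)%type.

Definition dist (p q : point) : R :=
  sqrt ((fst p - fst q)^2 + (snd p - snd q)^2).

Definition side : R := 1 / sqrt 2.

(* A grid Gamma is given by an offset (ox, oy); cells are indexed by Z*Z. *)
Definition cell := (Z * Z)%type.

Definition in_cell (o : point) (c : cell) (z : point) : Prop :=
  fst o + IZR (fst c) * side < fst z < fst o + IZR (fst c + 1) * side /\
  snd o + IZR (snd c) * side < snd z < snd o + IZR (snd c + 1) * side.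

Definition mid (x y : point) : point := ((fst x + fst y) / 2, (snd x + snd y) / 2).
Definition in_disk (x y z : point) : Prop := dist z (mid x y) <= dist x y / 2.

Definition meets (o : point) (S : point -> Prop) (c : cell) : Prop :=
  exists z, S z /\ in_cell o c z.

Definition at_most_cells (o : point) (S : point -> Prop) (n : nat) : Prop :=
  exists L : list cell, (length L <= n)%nat /\ forall c, meets o S c -> In c L.

Definition plus_neighbors (c c' : cell) : Prop :=
  (Z.abs (fst c - fst c') + Z.abs (snd c - snd c') = 1)%Z.
Definition times_neighbors (c c' : cell) : Prop :=
  Z.abs (fst c - fst c') = 1%Z /\ Z.abs (snd c - snd c') = 1%Z.
Definition neighbors (c c' : cell) : Prop := plus_neighbors c c' \/ times_neighbors c c'.

Definition Dunion (p1 p2 p3 p4 : point) (z : point) : Prop :=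
  in_disk p1 p2 z \/ in_disk p2 p3 z \/ in_disk p3 p4 z.

(* Main.v *)
Require Import Defs.
From Stdlib Require Import Lia Psatz Classical.
Import ListNotations.

Definition nic (c:cell) (z:point) : Prop :=
  IZR (fst c) < fst z < IZR (fst c) + 1 /\ IZR (snd c) < snd z < IZR (snd c) + 1.
Definition ndk (x y z:point) : Prop :=
  (fst z - fst x)*(fst z - fst y) + (snd z - snd x)*(snd z - snd y) <= 0.
Definition nd2 (x y:point) : R := (fst x - fst y)^2 + (snd x - snd y)^2.
Definition NDU (p1 p2 p3 p4 z : point) : Prop := ndk p1 p2 z \/ ndk p2 p3 z \/ ndk p3 p4 z.
Definition namc (S:point->Prop) (n:nat) : Prop :=
  exists L:list cell, (length L <= n)%nat /\ forall c z, S z -> nic c z -> In c L.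

Lemma ndk_sq x y z : ndk x y z ->
  (2*fst z - fst x - fst y)^2 <= nd2 x y /\ (2*snd z - snd x - snd y)^2 <= nd2 x y.
Proof. unfold ndk, nd2. intros H.
  assert (E1: (2*fst z - fst x - fst y)^2 + (2*snd z - snd x - snd y)^2 =
    4*((fst z - fst x)*(fst z - fst y) + (snd z - snd x)*(snd z - snd y)) + ((fst x - fst y)^2 + (snd x - snd y)^2)) by ring.
  assert (0 <= (2*fst z - fst x - fst y)^2) by (apply pow2_ge_0).
  assert (0 <= (2*snd z - snd x - snd y)^2) by (apply pow2_ge_0).
  split; lra. Qed.

Lemma spread x y z w : ndk x y z -> ndk x y w ->
  (fst z - fst w)^2 <= nd2 x y /\ (snd z - snd w)^2 <= nd2 x y.
Proof. intros H1 H2. destruct (ndk_sq _ _ _ H1), (ndk_sq _ _ _ H2).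
  split.
  - assert (E: (fst z - fst w)^2 = ((2*fst z - fst x - fst y)^2 + (2*fst w - fst x - fst y)^2)/2
      - ((2*fst z - fst x - fst y) + (2*fst w - fst x - fst y))^2/4) by field.
    assert (0 <= ((2*fst z - fst x - fst y) + (2*fst w - fst x - fst y))^2) by apply pow2_ge_0.
    lra.
  - assert (E: (snd z - snd w)^2 = ((2*snd z - snd x - snd y)^2 + (2*snd w - snd x - snd y)^2)/2
      - ((2*snd z - snd x - snd y) + (2*snd w - snd x - snd y))^2/4) by field.
    assert (0 <= ((2*snd z - snd x - snd y) + (2*snd w - snd x - snd y))^2) by apply pow2_ge_0.
    lra. Qed.

Lemma corner x y z : ndk x y z ->
  ~((fst z < fst x /\ fst z < fst y \/ fst z > fst x /\ fst z > fst y) /\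
    (snd z < snd x /\ snd z < snd y \/ snd z > snd x /\ snd z > snd y)).
Proof. unfold ndk. intros H [[[]|[]] [[]|[]]]; nra. Qed.

Lemma Zlt_R (k i : Z) : (k < i)%Z -> IZR k + 1 <= IZR i.
Proof. intros. rewrite <- plus_IZR. apply IZR_le. lia. Qed.

Lemma sq_bound X : X^2 < 4 -> -2 < X < 2.
Proof. intros. split; nra. Qed.

Lemma diskfacts (k l i1 j1 i2 j2 : Z) x y z :
  nic (i1,j1) x -> nic (i2,j2) y -> nd2 x y <= 2 -> ndk x y z -> nic (k,l) z ->
  (i1+i2-4 < 2*k < i1+i2+4 /\ j1+j2-4 < 2*l < j1+j2+4 /\
   ~(((k<i1 /\ k<i2) \/ (k>i1 /\ k>i2)) /\ ((l<j1/\l<j2) \/ (l>j1/\l>j2))))%Z.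
Proof.
  unfold nic; cbn [fst snd]. intros Hx Hy H2 Hd Hz.
  destruct (ndk_sq _ _ _ Hd) as [A B].
  assert (A' : -2 < 2*fst z - fst x - fst y < 2) by (apply sq_bound; lra).
  assert (B' : -2 < 2*snd z - snd x - snd y < 2) by (apply sq_bound; lra).
  split; [|split].
  - split; apply lt_IZR; rewrite ?minus_IZR, ?plus_IZR, ?mult_IZR; lra.
  - split; apply lt_IZR; rewrite ?minus_IZR, ?plus_IZR, ?mult_IZR; lra.
  - intros [[[a b]|[a b]] [[c d]|[c d]]]; apply (corner _ _ _ Hd);
    repeat match goal with h : (_ < _)%Z |- _ => apply Zlt_R in h end;
    repeat match goal with h : (_ > _)%Z |- _ => apply Z.gt_lt, Zlt_R in h end;
    lra.
Qed.

Lemma samecell (i j : Z) x y : nic (i,j) x -> nic (i,j) y -> nd2 x y <= 2.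
Proof. unfold nic, nd2; simpl; intros; nra. Qed.

Definition Full (pi' pi : cell) (p1 p2 p3 p4 : point) : Prop :=
  nic pi' p1 -> nic pi' p2 -> nic pi p3 -> nic pi p4 ->
  (nd2 p2 p3 <= 1 -> namc (NDU p1 p2 p3 p4) 8) /\
  (nd2 p2 p3 <= 2 -> plus_neighbors pi pi' -> namc (NDU p1 p2 p3 p4) 8) /\
  (nd2 p2 p3 <= 2 -> times_neighbors pi pi' -> namc (NDU p1 p2 p3 p4) 10) /\
  (nd2 p2 p3 <= 2 -> ~ neighbors pi pi' -> namc (NDU p1 p2 p3 p4) 11).

Lemma transport (f: point->point) (g ginv: cell->cell) :
 (forall c z, nic c z -> nic (g c) (f z)) ->
 (forall x y z, ndk x y z -> ndk (f x) (f y) (f z)) ->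
 (forall x y, nd2 (f x) (f y) = nd2 x y) ->
 (forall c c', plus_neighbors (g c) (g c') <-> plus_neighbors c c') ->
 (forall c c', times_neighbors (g c) (g c') <-> times_neighbors c c') ->
 (forall c, ginv (g c) = c) ->
 forall pi' pi p1 p2 p3 p4, Full (g pi') (g pi) (f p1) (f p2) (f p3) (f p4) -> Full pi' pi p1 p2 p3 p4.
Proof.
  intros Hic Hdk Hd2 Hpn Htn Hinv pi' pi p1 p2 p3 p4 HF H1 H2 H3 H4.
  assert (T: forall n, namc (NDU (f p1) (f p2) (f p3) (f p4)) n -> namc (NDU p1 p2 p3 p4) n).
  { intros n [L [HL HS]]. exists (map ginv L). rewrite length_map. split; auto.
    intros c z Hz Hc. rewrite <- (Hinv c). apply in_map. apply (HS _ (f z)); auto.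
    destruct Hz as [h|[h|h]]; unfold NDU; auto. }
  destruct (HF (Hic _ _ H1) (Hic _ _ H2) (Hic _ _ H3) (Hic _ _ H4)) as [A [B [C D]]].
  rewrite Hd2 in A, B, C, D.
  split; [|split; [|split]]; intros; apply T.
  - auto.
  - apply B; auto. apply Hpn; auto.
  - apply C; auto. apply Htn; auto.
  - apply D; auto. unfold neighbors. rewrite Hpn, Htn. auto.
Qed.

Ltac dk_tac := let H := fresh in intros ? ? ? H; unfold ndk in *; cbn [fst snd] in *;
  match goal with |- ?b <= 0 => match type of H with ?a <= 0 => replace b with a by ring; exact H end end.

Lemma trans_full (m n : Z) pi' pi p1 p2 p3 p4 :
  Full (fst pi' - m, snd pi' - n)%Z (fst pi - m, snd pi - n)%Z
    ((fst p1 - IZR m, snd p1 - IZR n)) ((fst p2 - IZR m, snd p2 - IZR n))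
    ((fst p3 - IZR m, snd p3 - IZR n)) ((fst p4 - IZR m, snd p4 - IZR n)) ->
  Full pi' pi p1 p2 p3 p4.
Proof.
  apply (transport (fun z => (fst z - IZR m, snd z - IZR n)) (fun c => (fst c - m, snd c - n)%Z)
     (fun c => (fst c + m, snd c + n)%Z)).
  - intros c z; unfold nic; cbn [fst snd]; rewrite !minus_IZR; lra.
  - dk_tac.
  - intros; unfold nd2; cbn [fst snd]; ring.
  - intros; unfold plus_neighbors; cbn [fst snd]; split; lia.
  - intros; unfold times_neighbors; cbn [fst snd]; split; lia.
  - intros [a b]; cbn [fst snd]; f_equal; lia.
Qed.

Lemma reflu_full pi' pi p1 p2 p3 p4 :
  Full (- fst pi', snd pi')%Z (- fst pi, snd pi)%Z
    ((1 - fst p1, snd p1)) ((1 - fst p2, snd p2))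
    ((1 - fst p3, snd p3)) ((1 - fst p4, snd p4)) ->
  Full pi' pi p1 p2 p3 p4.
Proof.
  apply (transport (fun z => (1 - fst z, snd z)) (fun c => (- fst c, snd c)%Z)
     (fun c => (- fst c, snd c)%Z)).
  - intros c z; unfold nic; cbn [fst snd]; rewrite !opp_IZR; lra.
  - dk_tac.
  - intros; unfold nd2; cbn [fst snd]; ring.
  - intros; unfold plus_neighbors; cbn [fst snd]; split; lia.
  - intros; unfold times_neighbors; cbn [fst snd]; split; lia.
  - intros [a b]; cbn [fst snd]; f_equal; lia.
Qed.

Lemma reflv_full pi' pi p1 p2 p3 p4 :
  Full (fst pi', - snd pi')%Z (fst pi, - snd pi)%Z
    ((fst p1, 1 - snd p1)) ((fst p2, 1 - snd p2))
    ((fst p3, 1 - snd p3)) ((fst p4, 1 - snd p4)) ->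
  Full pi' pi p1 p2 p3 p4.
Proof.
  apply (transport (fun z => (fst z, 1 - snd z)) (fun c => (fst c, - snd c)%Z)
     (fun c => (fst c, - snd c)%Z)).
  - intros c z; unfold nic; cbn [fst snd]; rewrite !opp_IZR; lra.
  - dk_tac.
  - intros; unfold nd2; cbn [fst snd]; ring.
  - intros; unfold plus_neighbors; cbn [fst snd]; split; lia.
  - intros; unfold times_neighbors; cbn [fst snd]; split; lia.
  - intros [a b]; cbn [fst snd]; f_equal; lia.
Qed.

Lemma swap_full pi' pi p1 p2 p3 p4 :
  Full (snd pi', fst pi') (snd pi, fst pi)
    ((snd p1, fst p1)) ((snd p2, fst p2))
    ((snd p3, fst p3)) ((snd p4, fst p4)) ->
  Full pi' pi p1 p2 p3 p4.
Proof.
  apply (transport (fun z => (snd z, fst z)) (fun c => (snd c, fst c))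
     (fun c => (snd c, fst c))).
  - intros c z; unfold nic; cbn [fst snd]; tauto.
  - dk_tac.
  - intros; unfold nd2; cbn [fst snd]; ring.
  - intros; unfold plus_neighbors; cbn [fst snd]; split; lia.
  - intros; unfold times_neighbors; cbn [fst snd]; split; lia.
  - intros [a b]; reflexivity.
Qed.

Lemma reduce :
  (forall a b p1 p2 p3 p4, (0 <= b <= a)%Z -> Full (0,0)%Z (a,b) p1 p2 p3 p4) ->
  forall pi' pi p1 p2 p3 p4, Full pi' pi p1 p2 p3 p4.
Proof.
  intros Hc.
  assert (S1: forall a b p1 p2 p3 p4, (0 <= a)%Z -> (0 <= b)%Z -> Full (0,0)%Z (a,b) p1 p2 p3 p4).
  { intros a b p1 p2 p3 p4 Ha Hb. destruct (Z.le_gt_cases b a).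
    - apply Hc; lia.
    - apply swap_full; cbn [fst snd]. apply Hc; lia. }
  assert (S2: forall a b p1 p2 p3 p4, Full (0,0)%Z (a,b) p1 p2 p3 p4).
  { intros a b p1 p2 p3 p4. destruct (Z.le_gt_cases 0 a), (Z.le_gt_cases 0 b).
    - apply S1; lia.
    - apply reflv_full; cbn [fst snd]. apply S1; lia.
    - apply reflu_full; cbn [fst snd]. apply S1; lia.
    - apply reflu_full, reflv_full; cbn [fst snd]. apply S1; lia. }
  intros [m n] [a b] p1 p2 p3 p4. apply (trans_full m n); cbn [fst snd].
  rewrite !Z.sub_diag. apply S2.
Qed.

Lemma ex11a_r x1 x2 y1 y2 u v : 0 < x1 < 1 -> 0 < x2 < 1 -> 1 < y1 < 2 -> 1 < y2 < 2 ->
  (x1-y1)^2 + (x2-y2)^2 <= 1 -> (u-x1)*(u-y1) + (v-x2)*(v-y2) <= 0 -> 2 < u -> 0 < v < 1 -> False.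
Proof. intros.
  assert (P: 0 < (u-x1-1)*(u-y1)) by (apply Rmult_lt_0_compat; lra).
  assert (T1: (u-x1)*(u-y1) > 2 - y1) by nra.
  assert (T2: (v-x2)*(v-y2) >= - (y2-x2)^2/4) by (assert (0 <= (2*v-x2-y2)^2) by apply pow2_ge_0; nra).
  assert (T3: (y1-x1)^2 > (y1-1)^2) by nra.
  assert (T4: 2 - y1 < (1 - (y1-1)^2)/4) by lra.
  nra. Qed.

Lemma ex11b_r x1 x2 y1 y2 u v : 0 < x1 < 1 -> 0 < x2 < 1 -> 1 < y1 < 2 -> 1 < y2 < 2 ->
  (x1-y1)^2 + (x2-y2)^2 <= 1 -> (u-x1)*(u-y1) + (v-x2)*(v-y2) <= 0 -> u < 0 -> 1 < v < 2 -> False.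
Proof. intros. apply (ex11a_r (2-y1) (2-y2) (2-x1) (2-x2) (2-u) (2-v)); lra. Qed.

Lemma ex11c_r x1 x2 y1 y2 u v : 0 < x1 < 1 -> 0 < x2 < 1 -> 1 < y1 < 2 -> 1 < y2 < 2 ->
  (x1-y1)^2 + (x2-y2)^2 <= 1 -> (u-x1)*(u-y1) + (v-x2)*(v-y2) <= 0 -> 2 < v -> 0 < u < 1 -> False.
Proof. intros. apply (ex11a_r x2 x1 y2 y1 v u); lra. Qed.

Lemma ex11d_r x1 x2 y1 y2 u v : 0 < x1 < 1 -> 0 < x2 < 1 -> 1 < y1 < 2 -> 1 < y2 < 2 ->
  (x1-y1)^2 + (x2-y2)^2 <= 1 -> (u-x1)*(u-y1) + (v-x2)*(v-y2) <= 0 -> v < 0 -> 1 < u < 2 -> False.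
Proof. intros. apply (ex11b_r x2 x1 y2 y1 v u); lra. Qed.

Lemma ex21a_r x1 x2 y1 y2 u v : 0 < x1 < 1 -> 0 < x2 < 1 -> 2 < y1 < 3 -> 1 < y2 < 2 ->
  (x1-y1)^2 + (x2-y2)^2 <= 2 -> (u-x1)*(u-y1) + (v-x2)*(v-y2) <= 0 -> 2 < u -> v < 0 -> False.
Proof. intros.
  assert (P: 0 < (u-2)*(u-x1-y1+2)) by (apply Rmult_lt_0_compat; lra).
  assert (T1: (u-x1)*(u-y1) + (y1-2)*(2-x1) > 0) by nra.
  assert (P2: 0 < (x2-v)*(y2-v-1)) by (apply Rmult_lt_0_compat; lra).
  assert (T2: (v-x2)*(v-y2) > x2) by nra.
  assert (T3: (y2-x2)^2 > (1-x2)^2) by nra.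
  assert (T4: x2 > (1-x1) + (y1-2)) by nra.
  assert (T5: (y1-2)*(1-x1) < 1-x1) by nra.
  nra. Qed.

Lemma ex21b_r x1 x2 y1 y2 u v : 0 < x1 < 1 -> 0 < x2 < 1 -> 2 < y1 < 3 -> 1 < y2 < 2 ->
  (x1-y1)^2 + (x2-y2)^2 <= 2 -> (u-x1)*(u-y1) + (v-x2)*(v-y2) <= 0 -> u < 1 -> 2 < v -> False.
Proof. intros. apply (ex21a_r (3-y1) (2-y2) (3-x1) (2-x2) (3-u) (2-v)); lra. Qed.

Fixpoint memP (k l : Z) (L : list cell) : Prop :=
  match L with nil => False | c :: L' => (k = fst c /\ l = snd c) \/ memP k l L' end.
Lemma memP_In k l L : memP k l L -> In (k,l) L.
Proof. induction L as [|[a b] L IH]; simpl; [tauto|]. intros [[-> ->]|H]; auto. Qed.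

Lemma pick2 (S: point -> Prop) (c1 c2: cell) :
  ~((exists z, S z /\ nic c1 z) /\ (exists z, S z /\ nic c2 z)) ->
  exists e : cell, forall z k l, S z -> nic (k,l) z ->
    ((k = fst c1 /\ l = snd c1) \/ (k = fst c2 /\ l = snd c2))%Z -> (k = fst e /\ l = snd e)%Z.
Proof.
  intros H. destruct (classic (exists z, S z /\ nic c1 z)) as [H1|H1].
  - exists c1. intros z k l Hs Hz [E|[E1 E2]]; auto. exfalso; apply H; split; auto.
    exists z; split; auto. destruct c2; simpl in *; subst; auto.
  - exists c2. intros z k l Hs Hz [[E1 E2]|E]; auto. exfalso; apply H1.
    exists z; split; auto. destruct c1; simpl in *; subst; auto.
Qed.

Ltac exr L := intros [x1 x2] [y1 y2] [u v] k l Hx Hy Hd Hk Hz [-> ->];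
  unfold nic, nd2, ndk in *; cbn [fst snd] in *; eapply L; [..|apply Hd|apply Hk| |]; lra.

Lemma ex11a x y z k l : nic (0,0)%Z x -> nic (1,1)%Z y -> nd2 x y <= 1 -> ndk x y z -> nic (k,l) z -> ~(k = 2 /\ l = 0)%Z.
Proof. revert x y z k l; exr ex11a_r. Qed.
Lemma ex11b x y z k l : nic (0,0)%Z x -> nic (1,1)%Z y -> nd2 x y <= 1 -> ndk x y z -> nic (k,l) z -> ~(k = -1 /\ l = 1)%Z.
Proof. revert x y z k l; exr ex11b_r. Qed.
Lemma ex11c x y z k l : nic (0,0)%Z x -> nic (1,1)%Z y -> nd2 x y <= 1 -> ndk x y z -> nic (k,l) z -> ~(k = 0 /\ l = 2)%Z.
Proof. revert x y z k l; exr ex11c_r. Qed.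
Lemma ex11d x y z k l : nic (0,0)%Z x -> nic (1,1)%Z y -> nd2 x y <= 1 -> ndk x y z -> nic (k,l) z -> ~(k = 1 /\ l = -1)%Z.
Proof. revert x y z k l; exr ex11d_r. Qed.
Lemma ex21a x y z k l : nic (0,0)%Z x -> nic (2,1)%Z y -> nd2 x y <= 2 -> ndk x y z -> nic (k,l) z -> ~(k = 2 /\ l = -1)%Z.
Proof. revert x y z k l; exr ex21a_r. Qed.
Lemma ex21b x y z k l : nic (0,0)%Z x -> nic (2,1)%Z y -> nd2 x y <= 2 -> ndk x y z -> nic (k,l) z -> ~(k = 0 /\ l = 2)%Z.
Proof. revert x y z k l; exr ex21b_r. Qed.

Lemma namc_weak S n m : namc S n -> (n <= m)%nat -> namc S m.
Proof. intros [L [H1 H2]] H. exists L; split; auto. lia. Qed.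

Lemma enumZ (k:Z) : (-2 <= k <= 4)%Z -> (k = -2 \/ k = -1 \/ k = 0 \/ k = 1 \/ k = 2 \/ k = 3 \/ k = 4)%Z.
Proof. lia. Qed.

Ltac fin k l := match goal with H : (_ /\ _ /\ ~ _)%Z |- _ =>
  let E1 := fresh in let E2 := fresh in
  assert (E1 : (-2 <= fst (k,l) <= 4)%Z) by (cbn [fst]; lia);
  assert (E2 : (-2 <= snd (k,l) <= 4)%Z) by (cbn [snd]; lia);
  cbn [fst snd] in E1, E2;
  destruct (enumZ k E1) as [ -> | [ -> | [ -> | [ -> | [ -> | [ -> | -> ]]]]]];
  destruct (enumZ l E2) as [ -> | [ -> | [ -> | [ -> | [ -> | [ -> | -> ]]]]]]; lia end.

Ltac setup L a b p1 p2 p3 p4 Hp1 Hp2 Hp3 Hp4 Hd :=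
  exists L; split; [simpl; lia|];
  intros [k l] z HS Hz; apply memP_In; simpl;
  destruct HS as [HD|[HD|HD]];
  [ pose proof (diskfacts k l 0 0 0 0 p1 p2 z Hp1 Hp2 (samecell _ _ _ _ Hp1 Hp2) HD Hz)
  | pose proof (diskfacts k l 0 0 a b p2 p3 z Hp2 Hp3 Hd HD Hz)
  | pose proof (diskfacts k l a b a b p3 p4 z Hp3 Hp4 (samecell _ _ _ _ Hp3 Hp4) HD Hz)].

Lemma case00 p1 p2 p3 p4 : nic (0,0)%Z p1 -> nic (0,0)%Z p2 -> nic (0,0)%Z p3 -> nic (0,0)%Z p4 ->
  namc (NDU p1 p2 p3 p4) 5.
Proof. intros Hp1 Hp2 Hp3 Hp4. pose proof (samecell _ _ _ _ Hp2 Hp3) as Hd.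
  setup ([(0,0);(1,0);(-1,0);(0,1);(0,-1)]%Z) 0%Z 0%Z p1 p2 p3 p4 Hp1 Hp2 Hp3 Hp4 Hd; fin k l.
Qed.

Lemma case10 p1 p2 p3 p4 : nic (0,0)%Z p1 -> nic (0,0)%Z p2 -> nic (1,0)%Z p3 -> nic (1,0)%Z p4 ->
  nd2 p2 p3 <= 2 -> namc (NDU p1 p2 p3 p4) 8.
Proof. intros Hp1 Hp2 Hp3 Hp4 Hd.
  setup ([(0,0);(1,0);(0,-1);(1,-1);(0,1);(1,1);(-1,0);(2,0)]%Z) 1%Z 0%Z p1 p2 p3 p4 Hp1 Hp2 Hp3 Hp4 Hd; fin k l.
Qed.

Lemma case20 p1 p2 p3 p4 : nic (0,0)%Z p1 -> nic (0,0)%Z p2 -> nic (2,0)%Z p3 -> nic (2,0)%Z p4 ->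
  nd2 p2 p3 <= 2 -> namc (NDU p1 p2 p3 p4) 11.
Proof. intros Hp1 Hp2 Hp3 Hp4 Hd.
  setup ([(0,-1);(1,-1);(2,-1);(0,0);(1,0);(2,0);(0,1);(1,1);(2,1);(-1,0);(3,0)]%Z) 2%Z 0%Z p1 p2 p3 p4 Hp1 Hp2 Hp3 Hp4 Hd; fin k l.
Qed.

Lemma case11a p1 p2 p3 p4 : nic (0,0)%Z p1 -> nic (0,0)%Z p2 -> nic (1,1)%Z p3 -> nic (1,1)%Z p4 ->
  nd2 p2 p3 <= 1 -> namc (NDU p1 p2 p3 p4) 8.
Proof. intros Hp1 Hp2 Hp3 Hp4 Hd1. assert (Hd : nd2 p2 p3 <= 2) by lra.
  setup ([(0,0);(1,0);(0,1);(1,1);(-1,0);(0,-1);(2,1);(1,2)]%Z) 1%Z 1%Z p1 p2 p3 p4 Hp1 Hp2 Hp3 Hp4 Hd; [fin k l| |fin k l].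
  pose proof (ex11a _ _ _ _ _ Hp2 Hp3 Hd1 HD Hz).
  pose proof (ex11b _ _ _ _ _ Hp2 Hp3 Hd1 HD Hz).
  pose proof (ex11c _ _ _ _ _ Hp2 Hp3 Hd1 HD Hz).
  pose proof (ex11d _ _ _ _ _ Hp2 Hp3 Hd1 HD Hz).
  fin k l.
Qed.

Lemma nb_h x y c1 c2 : nd2 x y <= 2 -> (fst c1 + 3 <= fst c2)%Z ->
  ~((exists z, ndk x y z /\ nic c1 z) /\ (exists z, ndk x y z /\ nic c2 z)).
Proof. intros Hd Hc [[z [Hz Hzc]] [w [Hw Hwc]]]. destruct (spread x y w z Hw Hz) as [S _].
  apply IZR_le in Hc. rewrite plus_IZR in Hc. unfold nic in *. nra. Qed.
Lemma nb_v x y c1 c2 : nd2 x y <= 2 -> (snd c1 + 3 <= snd c2)%Z ->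
  ~((exists z, ndk x y z /\ nic c1 z) /\ (exists z, ndk x y z /\ nic c2 z)).
Proof. intros Hd Hc [[z [Hz Hzc]] [w [Hw Hwc]]]. destruct (spread x y w z Hw Hz) as [_ S].
  apply IZR_le in Hc. rewrite plus_IZR in Hc. unfold nic in *. nra. Qed.

Lemma case11b p1 p2 p3 p4 : nic (0,0)%Z p1 -> nic (0,0)%Z p2 -> nic (1,1)%Z p3 -> nic (1,1)%Z p4 ->
  nd2 p2 p3 <= 2 -> namc (NDU p1 p2 p3 p4) 10.
Proof. intros Hp1 Hp2 Hp3 Hp4 Hd.
  destruct (pick2 (ndk p2 p3) (-1,1)%Z (2,0)%Z (nb_h p2 p3 (-1,1)%Z (2,0)%Z Hd ltac:(simpl; lia))) as [e1 He1].
  destruct (pick2 (ndk p2 p3) (1,-1)%Z (0,2)%Z (nb_v p2 p3 (1,-1)%Z (0,2)%Z Hd ltac:(simpl; lia))) as [e2 He2].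
  setup ([(0,0);(1,0);(0,1);(1,1);(-1,0);(0,-1);(2,1);(1,2);e1;e2]%Z) 1%Z 1%Z p1 p2 p3 p4 Hp1 Hp2 Hp3 Hp4 Hd; [fin k l| |fin k l].
  pose proof (He1 z k l HD Hz). pose proof (He2 z k l HD Hz). cbn [fst snd] in *. fin k l.
Qed.

Lemma case21 p1 p2 p3 p4 : nic (0,0)%Z p1 -> nic (0,0)%Z p2 -> nic (2,1)%Z p3 -> nic (2,1)%Z p4 ->
  nd2 p2 p3 <= 2 -> namc (NDU p1 p2 p3 p4) 11.
Proof. intros Hp1 Hp2 Hp3 Hp4 Hd.
  destruct (pick2 (ndk p2 p3) (1,-1)%Z (1,2)%Z (nb_v p2 p3 (1,-1)%Z (1,2)%Z Hd ltac:(simpl; lia))) as [e1 He1].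
  setup ([(0,0);(1,0);(2,0);(0,1);(1,1);(2,1);(-1,0);(3,1);(0,-1);(2,2);e1]%Z) 2%Z 1%Z p1 p2 p3 p4 Hp1 Hp2 Hp3 Hp4 Hd; [fin k l| |fin k l].
  pose proof (He1 z k l HD Hz).
  pose proof (ex21a _ _ _ _ _ Hp2 Hp3 Hd HD Hz).
  pose proof (ex21b _ _ _ _ _ Hp2 Hp3 Hd HD Hz).
  cbn [fst snd] in *. fin k l.
Qed.

Lemma far2 a b x y : nic (0,0)%Z x -> nic (a,b) y -> (0 <= b <= a)%Z -> nd2 x y <= 2 ->
  (a <= 2 /\ ~(a = 2 /\ b = 2))%Z.
Proof. destruct x as [x1 x2], y as [y1 y2]; unfold nic, nd2; cbn [fst snd]; intros Hx Hy Hab Hd.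
  split.
  - destruct (Z.le_gt_cases a 2) as [h|h]; auto. exfalso.
    assert (IZR 3 <= IZR a) by (apply IZR_le; lia).
    assert (y1 - x1 > 2) by lra. assert (0 <= (x2-y2)^2) by apply pow2_ge_0. nra.
  - intros [-> ->]. assert (y1 - x1 > 1) by lra. assert (y2 - x2 > 1) by lra. nra.
Qed.

Lemma far1 a b x y : nic (0,0)%Z x -> nic (a,b) y -> (0 <= b <= a)%Z -> nd2 x y <= 1 -> (a <= 1)%Z.
Proof. destruct x as [x1 x2], y as [y1 y2]; unfold nic, nd2; cbn [fst snd]; intros Hx Hy Hab Hd.
  destruct (Z.le_gt_cases a 1) as [h|h]; auto. exfalso.
  assert (IZR 2 <= IZR a) by (apply IZR_le; lia).
  assert (y1 - x1 > 1) by lra. assert (0 <= (x2-y2)^2) by apply pow2_ge_0. nra.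
Qed.

Lemma canon a b p1 p2 p3 p4 : (0 <= b <= a)%Z -> Full (0,0)%Z (a,b) p1 p2 p3 p4.
Proof.
  intros Hab H1 H2 H3 H4. split; [|split; [|split]].
  - intros Hd. pose proof (far1 _ _ _ _ H2 H3 Hab Hd).
    assert ((a = 0 /\ b = 0) \/ (a = 1 /\ b = 0) \/ (a = 1 /\ b = 1))%Z as [[-> ->]|[[-> ->]|[-> ->]]] by lia.
    + apply (namc_weak _ 5); [apply case00; auto | lia].
    + apply case10; auto; lra.
    + apply case11a; auto.
  - intros Hd Hp. unfold plus_neighbors in Hp; cbn [fst snd] in Hp.
    assert (a = 1 /\ b = 0)%Z as [-> ->] by lia. apply case10; auto.
  - intros Hd Hp. unfold times_neighbors in Hp; cbn [fst snd] in Hp.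
    assert (a = 1 /\ b = 1)%Z as [-> ->] by lia. apply case11b; auto.
  - intros Hd Hn. pose proof (far2 _ _ _ _ H2 H3 Hab Hd).
    unfold neighbors, plus_neighbors, times_neighbors in Hn; cbn [fst snd] in Hn.
    assert ((a = 0 /\ b = 0) \/ (a = 2 /\ b = 0) \/ (a = 2 /\ b = 1))%Z as [[-> ->]|[[-> ->]|[-> ->]]] by lia.
    + apply (namc_weak _ 5); [apply case00; auto | lia].
    + apply case20; auto.
    + apply case21; auto.
Qed.

Lemma allfull pi' pi p1 p2 p3 p4 : Full pi' pi p1 p2 p3 p4.
Proof. apply reduce. intros; apply canon; auto. Qed.

Definition Nz (o z : point) : point := ((fst z - fst o) * sqrt 2, (snd z - snd o) * sqrt 2).

Lemma q_facts : 0 < sqrt 2 /\ sqrt 2 * sqrt 2 = 2.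
Proof. split. apply sqrt_lt_R0; lra. apply sqrt_sqrt; lra. Qed.

Lemma scale_lt A B : A * side < B -> A < B * sqrt 2.
Proof. destruct q_facts as [q0 q2]. unfold side. intros H.
  assert (E: A = A * (1 / sqrt 2) * sqrt 2) by (field; lra). rewrite E.
  apply Rmult_lt_compat_r; auto. Qed.
Lemma scale_gt A B : B < A * side -> B * sqrt 2 < A.
Proof. destruct q_facts as [q0 q2]. unfold side. intros H.
  assert (E: A = A * (1 / sqrt 2) * sqrt 2) by (field; lra). rewrite E.
  apply Rmult_lt_compat_r; auto. Qed.

Lemma N_cell o c z : in_cell o c z -> nic c (Nz o z).
Proof. unfold in_cell, nic, Nz; cbn [fst snd]. rewrite !plus_IZR.
  intros [[a b] [c' d]].
  repeat split; [apply scale_lt | apply scale_gt | apply scale_lt | apply scale_gt]; lra. Qed.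

Lemma sq_le a b : 0 <= a -> a <= b -> a * a <= b * b.
Proof. intros. nra. Qed.

Lemma N_disk o x y z : in_disk x y z -> ndk (Nz o x) (Nz o y) (Nz o z).
Proof. destruct q_facts as [q0 q2]. unfold in_disk, dist, ndk, Nz, mid; cbn [fst snd].
  assert (Eq : ((fst z - fst o) * sqrt 2 - (fst x - fst o) * sqrt 2) *
    ((fst z - fst o) * sqrt 2 - (fst y - fst o) * sqrt 2) +
    ((snd z - snd o) * sqrt 2 - (snd x - snd o) * sqrt 2) *
    ((snd z - snd o) * sqrt 2 - (snd y - snd o) * sqrt 2) = (sqrt 2 * sqrt 2) * (((fst z - (fst x + fst y) / 2) ^ 2 + (snd z - (snd x + snd y) / 2) ^ 2) - ((fst x - fst y) ^ 2 + (snd x - snd y) ^ 2)/4))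
    by field.
  set (E := (fst z - (fst x + fst y) / 2) ^ 2 + (snd z - (snd x + snd y) / 2) ^ 2).
  set (Dd := (fst x - fst y) ^ 2 + (snd x - snd y) ^ 2).
  intros H.
  assert (E0 : 0 <= E) by (unfold E; assert (0 <= (fst z - (fst x + fst y) / 2) ^ 2) by apply pow2_ge_0;
     assert (0 <= (snd z - (snd x + snd y) / 2) ^ 2) by apply pow2_ge_0; lra).
  assert (D0 : 0 <= Dd) by (unfold Dd; assert (0 <= (fst x - fst y) ^ 2) by apply pow2_ge_0;
     assert (0 <= (snd x - snd y) ^ 2) by apply pow2_ge_0; lra).
  pose proof (sq_le _ _ (sqrt_pos E) H) as H'.
  rewrite sqrt_sqrt in H' by auto.
  assert (H'' : E <= Dd / 4).
  { replace (sqrt Dd / 2 * (sqrt Dd / 2)) with ((sqrt Dd * sqrt Dd)/4) in H' by field.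
    rewrite sqrt_sqrt in H' by auto. exact H'. }

  rewrite Eq, q2. fold E Dd. lra.
Qed.

Lemma N_d2 o x y : nd2 (Nz o x) (Nz o y) = 2 * (dist x y * dist x y).
Proof. destruct q_facts as [q0 q2]. unfold nd2, Nz, dist; cbn [fst snd].
  rewrite sqrt_sqrt.
  - transitivity ((sqrt 2 * sqrt 2) * ((fst x - fst y) ^ 2 + (snd x - snd y) ^ 2)); [ring|].
    rewrite q2. ring.
  - assert (0 <= (fst x - fst y) ^ 2) by apply pow2_ge_0;
    assert (0 <= (snd x - snd y) ^ 2) by apply pow2_ge_0; lra.
Qed.

Lemma transfer o p1 p2 p3 p4 n : namc (NDU (Nz o p1) (Nz o p2) (Nz o p3) (Nz o p4)) n ->
  at_most_cells o (Dunion p1 p2 p3 p4) n.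
Proof. intros [L [HL HS]]. exists L. split; auto. intros c [z [Hz Hc]].
  apply (HS c (Nz o z)); [|apply N_cell; auto].
  destruct Hz as [h|[h|h]]; unfold NDU; [left|right;left|right;right]; apply N_disk; auto. Qed.

Theorem lemma6 (o : point) (pi pi' : cell) (p1 p2 p3 p4 : point) :
  in_cell o pi' p1 -> in_cell o pi' p2 -> in_cell o pi p3 -> in_cell o pi p4 ->
  (dist p2 p3 <= 1 / sqrt 2 -> at_most_cells o (Dunion p1 p2 p3 p4) 8) /\
  (dist p2 p3 <= 1 -> plus_neighbors pi pi' -> at_most_cells o (Dunion p1 p2 p3 p4) 8) /\
  (dist p2 p3 <= 1 -> times_neighbors pi pi' -> at_most_cells o (Dunion p1 p2 p3 p4) 10) /\
  (dist p2 p3 <= 1 -> ~ neighbors pi pi' -> at_most_cells o (Dunion p1 p2 p3 p4) 11).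
Proof.
  intros H1 H2 H3 H4.
  destruct (allfull pi' pi (Nz o p1) (Nz o p2) (Nz o p3) (Nz o p4)
    (N_cell _ _ _ H1) (N_cell _ _ _ H2) (N_cell _ _ _ H3) (N_cell _ _ _ H4)) as [A [B [C D]]].
  destruct q_facts as [q0 q2].
  pose proof (N_d2 o p2 p3) as Hn.
  assert (d0 : 0 <= dist p2 p3) by (unfold dist; apply sqrt_pos).
  split; [|split; [|split]]; intros Hd; intros; apply transfer.
  - apply A. rewrite Hn.
    assert (dist p2 p3 * sqrt 2 <= 1).
    { replace 1 with (1 / sqrt 2 * sqrt 2) by (field; lra).
      apply Rmult_le_compat_r; lra. }
    nra.
  - apply B; auto. rewrite Hn. nra.
  - apply C; auto. rewrite Hn. nra.
  - apply D; auto. rewrite Hn. nra.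
Qed.
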